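(* Let $(T,\eta,(-)^\#,\sqsubseteq,\Uparrow)$ be a while-monad on $\mathbf{Set}$, $(\Omega,\le)$ a complete lattice and $o:T\Omega\to\Omega$ a meet-preserving Eilenberg–Moore $T$-algebra such that $o(\bigsqcup_i c_i)=\bigwedge_i o(c_i)$ for every $\omega$-chain $(c_i)$ in $(T\Omega,\sqsubseteq_\Omega)$ and $o(\Uparrow_\Omega)=\top$. Then for every condition $b$ and program $P$, $\llbracket\mathtt{while}\ b\ \{P\}\rrbracket^c=\mu\Psi$, where $\mu\Psi$ is the least fixpoint, in the complete lattice of join-preserving maps $\mathcal P_\Omega(\mathbb M)\to\mathcal P_\Omega(\mathbb M)$ ordered pointwise, of $\Psi(f)=\lambda\phi.\ f(\llbracket P\rrbracket^c(\phi\wedge_{\mathbb M}\mathrm{grd}_b^{\mathrm{tt}}))\vee_{\mathbb M}(\phi\wedge_{\mathbb M}\mathrm{grd}_b^{\mathrm{ff}})$.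
   Context: Fix a set of values $\mathbb V$, a finite set of variables $X$, and memories $\mathbb M=\mathbb V^X$. Programs: $P::=\mathtt{skip}\mid P;P\mid x:=e\mid \mathtt{if}\ b\ \{P\}\ \mathtt{else}\ \{P\}\mid \mathtt{while}\ b\ \{P\}$. Each condition $b$ has a given interpretation $\llbracket b\rrbracket:\mathbb M\to\{\mathrm{ff},\mathrm{tt}\}$. A while-monad on $\mathbf{Set}$ is a monad $(T,\eta,(-)^\#)$ on $\mathbf{Set}$ together with an $\omega$-cpo structure $(\sqsubseteq_X,\Uparrow_X)$ (least element $\Uparrow_X$, sups $\bigsqcup$ of $\omega$-chains) on each $TX$, such that, with $\sqsubseteq_{X,Y}$ the pointwise order on Kleisli maps $\mathbf{Set}_T(X,Y)=\mathbf{Set}(X,TY)$ and $\Uparrow_{X,Y}=\lambda x.\Uparrow_Y$: Kleisli composition $g\bullet f=g^\#\circ f$ is monotone and $\omega$-continuous in each argument, and $f\bullet\Uparrow_{X,Y}=\Uparrow_{X,Z}$. Monadic semantics: each assignment has a given $\llbracket x:=e\rrbracket\in\mathbf{Set}_T(\mathbb M,\mathbb M)$, and $\llbracket\mathtt{skip}\rrbracket_T=\eta_{\mathbb M}$, $\llbracket P;P'\rrbracket_T=\llbracket P'\rrbracket_T\bullet\llbracket P\rrbracket_T$, $\llbracket x:=e\rrbracket_T=\llbracket x:=e\rrbracket$, $\llbracket\mathtt{if}\ b\ \{P_1\}\ \mathtt{else}\ \{P_2\}\rrbracket_T=\lambda\rho.$ if $\llbracket b\rrbracket\rho=\mathrm{tt}$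 then $\llbracket P_1\rrbracket_T(\rho)$ else $\llbracket P_2\rrbracket_T(\rho)$, $\llbracket\mathtt{while}\ b\ \{P\}\rrbracket_T=\mu\Phi$ (least fixpoint w.r.t. $\sqsubseteq_{\mathbb M,\mathbb M}$) with $\Phi(f)=\lambda\rho.$ if $\llbracket b\rrbracket\rho=\mathrm{tt}$ then $(f\bullet\llbracket P\rrbracket_T)(\rho)$ else $\eta_{\mathbb M}(\rho)$. $\mathcal P_\Omega(Y)=(\mathbf{Set}(Y,\Omega),\le_Y)$ with pointwise order and lattice operations $\wedge_Y,\vee_Y,\bot_Y,\top_Y$. An Eilenberg–Moore algebra $o$ is meet-preserving if each $\phi\mapsto o\circ T\phi:\mathcal P_\Omega(Y)\to\mathcal P_\Omega(TY)$ preserves arbitrary meets. For $f\in\mathbf{Set}_T(Y,Z)$, $wp^o(f)(\phi)=o\circ T\phi\circ f$ and $sp^o(f)$ is the left adjoint of $wp^o(f)$. The collecting semantics is $\llbracket P\rrbracket^c=sp^o(\llbracket P\rrbracket_T)$. $\mathrm{grd}_b^v(\rho)=\top$ if $\llbracket b\rrbracket\rho=v$, else $\bot$. *)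

(* Defs.v *)
From Stdlib Require Import List ClassicalEpsilon.
Set Implicit Arguments.

Record WhileMonad := {
  T : Type -> Type;
  ret : forall X, X -> T X;
  ext : forall X Y, (X -> T Y) -> T X -> T Y;
  le : forall X, T X -> T X -> Prop;
  bot : forall X, T X;
  sup : forall X, (nat -> T X) -> T X;
  ext_ret : forall X (t : T X), ext (@ret X) t = t;
  ext_ret_l : forall X Y (f : X -> T Y) x, ext f (ret x) = f x;
  ext_ext : forall X Y Z (f : X -> T Y) (g : Y -> T Z) t,
      ext g (ext f t) = ext (fun x => ext g (f x)) t;
  le_refl : forall X (t : T X), le t t;
  le_trans : forall X (t u v : T X), le t u -> le u v -> le t v;
  le_antisym : forall X (t u : T X), le t u -> le u t -> t = u;
  bot_least : forall X (t : T X), le (bot X) t;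
  sup_ub : forall X (c : nat -> T X),
      (forall n, le (c n) (c (S n))) -> forall n, le (c n) (sup c);
  sup_least : forall X (c : nat -> T X) (u : T X),
      (forall n, le (c n) (c (S n))) -> (forall n, le (c n) u) -> le (sup c) u;
  kcomp_mono_r : forall X Y Z (g : Y -> T Z) (f f' : X -> T Y),
      (forall x, le (f x) (f' x)) -> forall x, le (ext g (f x)) (ext g (f' x));
  kcomp_mono_l : forall X Y Z (g g' : Y -> T Z) (f : X -> T Y),
      (forall y, le (g y) (g' y)) -> forall x, le (ext g (f x)) (ext g' (f x));
  (* ... and omega-continuous in each argument (sups in Kleisli hom-sets
     are pointwise) *)
  kcomp_cont_r : forall X Y Z (g : Y -> T Z) (fs : nat -> X -> T Y),
      (forall n x, le (fs n x) (fs (S n) x)) ->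
      forall x, ext g (sup (fun n => fs n x)) = sup (fun n => ext g (fs n x));
  kcomp_cont_l : forall X Y Z (gs : nat -> Y -> T Z) (f : X -> T Y),
      (forall n y, le (gs n y) (gs (S n) y)) ->
      forall x, ext (fun y => sup (fun n => gs n y)) (f x)
                = sup (fun n => ext (gs n) (f x));
  kcomp_bot : forall Y Z (f : Y -> T Z), ext f (bot Y) = bot Z
}.

Arguments ret {w X}.
Arguments ext {w X Y}.
Arguments le {w X}.
Arguments bot {w}.
Arguments sup {w X}.

Section Kleisli.
Variable W : WhileMonad.
Definition kle {X Y : Type} (f g : X -> T W Y) : Prop := forall x, le (f x) (g x).
Definition kcomp {X Y Z : Type} (g : Y -> T W Z) (f : X -> T W Y) : X -> T W Z :=
  fun x => ext g (f x).
Definition Tmap {X Y : Type} (f : X -> Y) : T W X -> T W Y :=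
  ext (fun x => ret (f x)).
Definition is_klfp {X Y : Type} (F : (X -> T W Y) -> (X -> T W Y)) (f : X -> T W Y) :=
  (forall x, F f x = f x) /\ (forall g, (forall x, F g x = g x) -> kle f g).
Definition klfp {X Y : Type} (F : (X -> T W Y) -> (X -> T W Y)) : X -> T W Y :=
  epsilon (inhabits (fun _ => bot Y)) (is_klfp F).
End Kleisli.

Record CLattice := {
  car : Type;
  cle : car -> car -> Prop;
  cle_refl : forall x, cle x x;
  cle_trans : forall x y z, cle x y -> cle y z -> cle x z;
  cle_antisym : forall x y, cle x y -> cle y x -> x = y;
  Meet : (car -> Prop) -> car;
  Meet_lb : forall S x, S x -> cle (Meet S) x;
  Meet_glb : forall S y, (forall x, S x -> cle y x) -> cle y (Meet S);
  Join : (car -> Prop) -> car;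
  Join_ub : forall S x, S x -> cle x (Join S);
  Join_lub : forall S y, (forall x, S x -> cle x y) -> cle (Join S) y
}.

Arguments cle {c}.
Arguments Meet {c}.
Arguments Join {c}.

Section Lattice.
Variable L : CLattice.
Definition meet2 (a b : car L) : car L := Meet (fun x => x = a \/ x = b).
Definition join2 (a b : car L) : car L := Join (fun x => x = a \/ x = b).
Definition ltop : car L := Meet (fun _ => False).
Definition lbot : car L := Join (fun _ => False).

(* P_Omega(Y) = Set(Y, Omega) with pointwise order and operations *)
Definition ple {Y : Type} (phi psi : Y -> car L) := forall y, cle (phi y) (psi y).
Definition pmeet {Y : Type} (phi psi : Y -> car L) : Y -> car L :=
  fun y => meet2 (phi y) (psi y).
Definition pjoin {Y : Type} (phi psi : Y -> car L) : Y -> car L :=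
  fun y => join2 (phi y) (psi y).
Definition pMeet {Y : Type} (S : (Y -> car L) -> Prop) : Y -> car L :=
  fun y => Meet (fun w => exists phi, S phi /\ w = phi y).
Definition pJoin {Y : Type} (S : (Y -> car L) -> Prop) : Y -> car L :=
  fun y => Join (fun w => exists phi, S phi /\ w = phi y).

Definition join_preserving {Y Z : Type} (f : (Y -> car L) -> (Z -> car L)) :=
  forall (S : (Y -> car L) -> Prop) z,
    f (pJoin S) z = pJoin (fun psi => exists phi, S phi /\ psi = f phi) z.

Definition is_lfp_jp {Y : Type}
  (Psi : ((Y -> car L) -> (Y -> car L)) -> ((Y -> car L) -> (Y -> car L)))
  (f : (Y -> car L) -> (Y -> car L)) :=
  join_preserving f /\
  (forall phi y, Psi f phi y = f phi y) /\
  (forall g, join_preserving g -> (forall phi y, Psi g phi y = g phi y) ->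
     forall phi y, cle (f phi y) (g phi y)).
End Lattice.
Arguments meet2 {L}.
Arguments join2 {L}.
Arguments ple {L Y}.
Arguments pmeet {L Y}.
Arguments pjoin {L Y}.
Arguments pMeet {L Y}.
Arguments pJoin {L Y}.
Arguments join_preserving {L Y Z}.
Arguments is_lfp_jp {L Y}.

Section Algebra.
Variable W : WhileMonad.
Variable L : CLattice.
Variable o : T W (car L) -> car L.

Definition EM_algebra : Prop :=
  (forall x : car L, o (ret x) = x) /\
  (forall tt : T W (T W (car L)),
      o (Tmap W o tt) = o (ext (fun t => t) tt)).

(* each phi |-> o o T phi : P_Omega(Y) -> P_Omega(TY) preserves arbitrary meets *)
Definition meet_preserving : Prop :=
  forall (Y : Type) (S : (Y -> car L) -> Prop) (t : T W Y),
    o (Tmap W (pMeet S) t)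
    = pMeet (fun psi => exists phi, S phi /\ psi = (fun u => o (Tmap W phi u))) t.

Definition wp {Y Z : Type} (f : Y -> T W Z) (phi : Z -> car L) : Y -> car L :=
  fun y => o (Tmap W phi (f y)).

Definition is_left_adjoint {Y Z : Type}
  (g : (Y -> car L) -> (Z -> car L)) (h : (Z -> car L) -> (Y -> car L)) :=
  forall phi psi, ple (g phi) psi <-> ple phi (h psi).

Definition sp {Y Z : Type} (f : Y -> T W Z) : (Y -> car L) -> (Z -> car L) :=
  epsilon (inhabits (fun _ _ => lbot L)) (fun g => is_left_adjoint g (wp f)).
End Algebra.

Inductive prog (Var Expr Cond : Type) : Type :=
| Skip : prog Var Expr Cond
| Seq : prog Var Expr Cond -> prog Var Expr Cond -> prog Var Expr Cond
| Assign : Var -> Expr -> prog Var Expr Cond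
| If : Cond -> prog Var Expr Cond -> prog Var Expr Cond -> prog Var Expr Cond
| While : Cond -> prog Var Expr Cond -> prog Var Expr Cond.

Arguments Skip {Var Expr Cond}.
Arguments Seq {Var Expr Cond}.
Arguments Assign {Var Expr Cond}.
Arguments If {Var Expr Cond}.
Arguments While {Var Expr Cond}.

Section Semantics.
Variable W : WhileMonad.
Variables Var Val Expr Cond : Type.
Local Notation M := (Var -> Val).
Variable cond : Cond -> M -> bool.
Variable asg : Var -> Expr -> M -> T W M.

Definition Phi (b : Cond) (body : M -> T W M) (f : M -> T W M) : M -> T W M :=
  fun rho => if cond b rho then kcomp W f body rho else ret rho.

Fixpoint msem (P : prog Var Expr Cond) : M -> T W M :=
  match P with
  | Skip => fun rho => ret rho
  | Seq P1 P2 => kcomp W (msem P2) (msem P1)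
  | Assign x e => asg x e
  | If b P1 P2 => fun rho => if cond b rho then msem P1 rho else msem P2 rho
  | While b P1 => klfp W (Phi b (msem P1))
  end.

Variable L : CLattice.
Variable o : T W (car L) -> car L.

Definition csem (P : prog Var Expr Cond) : (M -> car L) -> (M -> car L) :=
  @sp W L o _ _ (msem P).

Definition grd (b : Cond) (v : bool) : M -> car L :=
  fun rho => if Bool.eqb (cond b rho) v then ltop L else lbot L.

Definition Psi (b : Cond) (P : prog Var Expr Cond)
  (f : (M -> car L) -> (M -> car L)) : (M -> car L) -> (M -> car L) :=
  fun phi => pjoin (f (csem P (pmeet phi (grd b true))))
                   (pmeet phi (grd b false)).
End Semantics.

(* Main.v *)
Require Import Defs.
From Stdlib Require Import FunctionalExtensionality ClassicalEpsilon.
Set Implicit Arguments.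

Section Lat.
Variable L : CLattice.
Lemma m2_l (a c : car L) : cle (meet2 a c) a.
Proof. apply Meet_lb; auto. Qed.
Lemma m2_r (a c : car L) : cle (meet2 a c) c.
Proof. apply Meet_lb; auto. Qed.
Lemma m2_glb (a c d : car L) : cle d a -> cle d c -> cle d (meet2 a c).
Proof. intros; apply Meet_glb; intros x [->| ->]; auto. Qed.
Lemma j2_l (a c : car L) : cle a (join2 a c).
Proof. apply Join_ub; auto. Qed.
Lemma j2_r (a c : car L) : cle c (join2 a c).
Proof. apply Join_ub; auto. Qed.
Lemma j2_lub (a c d : car L) : cle a d -> cle c d -> cle (join2 a c) d.
Proof. intros; apply Join_lub; intros x [->| ->]; auto. Qed.
Lemma top_max (a : car L) : cle a (ltop L).
Proof. apply Meet_glb; intros _ []. Qed.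
Lemma bot_min (a : car L) : cle (lbot L) a.
Proof. apply Join_lub; intros _ []. Qed.
End Lat.

Section Adj.
Variable W : WhileMonad.
Variable L : CLattice.
Variable o : T W (car L) -> car L.
Hypothesis Halg : EM_algebra W L o.
Hypothesis Hmeet : meet_preserving W L o.

Lemma wp_mono Y Z (f : Y -> T W Z) (p q : Z -> car L) :
  ple p q -> ple (wp W L o f p) (wp W L o f q).
Proof.
  intros H y. unfold wp.
  set (S := fun r : Z -> car L => r = p \/ r = q).
  assert (E : pMeet S = p).
  { extensionality z. apply cle_antisym.
    - apply Meet_lb. exists p. split; [left; reflexivity | reflexivity].
    - apply Meet_glb. intros w [r [[-> | ->] ->]]; [apply cle_refl | apply H]. }
  rewrite <- E, (Hmeet S (f y)). apply Meet_lb.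
  exists (fun u => o (Tmap W q u)). split; [|reflexivity].
  exists q. split; [right; reflexivity | reflexivity].
Qed.

Definition spE {Y Z} (f : Y -> T W Z) (p : Y -> car L) : Z -> car L :=
  pMeet (fun r => ple p (wp W L o f r)).

Lemma spE_adj Y Z (f : Y -> T W Z) : is_left_adjoint L (spE f) (wp W L o f).
Proof.
  intros p q; split.
  - intros H. intros y.
    eapply cle_trans; [| apply (wp_mono f H)].
    unfold wp at 1, spE. rewrite Hmeet. apply Meet_glb.
    intros w [r [[r' [Hr' ->]] ->]]. apply Hr'.
  - intros H z. apply Meet_lb. exists q; auto.
Qed.

Lemma sp_adj Y Z (f : Y -> T W Z) : is_left_adjoint L (sp W L o f) (wp W L o f).
Proof.
  unfold sp. apply (epsilon_spec (inhabits (fun _ _ => lbot L))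
     (fun g => is_left_adjoint L g (wp W L o f))).
  exists (spE f). apply spE_adj.
Qed.

Lemma adj_unique Y Z (g g' : (Y -> car L) -> Z -> car L) h :
  is_left_adjoint L g h -> is_left_adjoint L g' h ->
  forall p z, g p z = g' p z.
Proof.
  intros H1 H2 p z. apply cle_antisym.
  - revert z. apply H1. apply H2. intro; apply cle_refl.
  - revert z. apply H2. apply H1. intro; apply cle_refl.
Qed.

Lemma adj_unit Y Z (g : (Y -> car L) -> Z -> car L) h :
  is_left_adjoint L g h -> forall p, ple p (h (g p)).
Proof. intros H p. apply H. intro; apply cle_refl. Qed.

Lemma adj_mono Y Z (g : (Y -> car L) -> Z -> car L) h :
  is_left_adjoint L g h -> forall p q, ple p q -> ple (g p) (g q).
Proof.
  intros H p q Hpq. apply H. intro y. eapply cle_trans; [apply Hpq|].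
  apply (adj_unit H).
Qed.

Lemma adj_jp Y Z (g : (Y -> car L) -> Z -> car L) h :
  is_left_adjoint L g h -> join_preserving g.
Proof.
  intros H S z. apply cle_antisym.
  - revert z. apply H. intros y. apply Join_lub.
    intros w [p [Hp ->]]. revert y. apply H.
    intros z. apply Join_ub. exists (g p). split; [exists p; auto | reflexivity].
  - apply Join_lub. intros w [r [[p [Hp ->]] ->]].
    apply (adj_mono H). intros y. apply Join_ub. exists p; auto.
Qed.

Lemma o_ext Y (k : Y -> T W (car L)) (t : T W Y) :
  o (ext k t) = o (Tmap W (fun y => o (k y)) t).
Proof.
  destruct Halg as [H1 H2].
  assert (E1 : ext k t = ext (fun t => t) (Tmap W k t)).
  { unfold Tmap. rewrite ext_ext. f_equal. extensionality x. rewrite ext_ret_l. reflexivity. }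
  rewrite E1, <- H2. unfold Tmap. rewrite ext_ext. f_equal. f_equal.
  extensionality x. rewrite ext_ret_l. reflexivity.
Qed.

Lemma wp_kcomp X Y Z (g : Y -> T W Z) (f : X -> T W Y) p x :
  wp W L o (kcomp W g f) p x = wp W L o f (wp W L o g p) x.
Proof.
  unfold wp, kcomp. unfold Tmap at 1. rewrite ext_ext. rewrite o_ext. reflexivity.
Qed.

Lemma wp_ret X (p : X -> car L) x : o (Tmap W p (ret x)) = p x.
Proof. unfold Tmap. rewrite ext_ret_l. apply (proj1 Halg). Qed.

End Adj.

Section Main.
Variable W : WhileMonad.
Variable L : CLattice.
Variable o : T W (car L) -> car L.
Variables Var Val Expr Cond : Type.
Variable cond : Cond -> (Var -> Val) -> bool.
Variable asg : Var -> Expr -> (Var -> Val) -> T W (Var -> Val).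
Hypothesis Halg : EM_algebra W L o.
Hypothesis Hmeet : meet_preserving W L o.
Hypothesis Hchain : forall c : nat -> T W (car L),
      (forall n, le (c n) (c (S n))) ->
      o (sup c) = Meet (fun w => exists n, w = o (c n)).
Hypothesis Hbot : o (bot (car L)) = ltop L.
Variable b : Cond.
Variable P : prog Var Expr Cond.

Local Notation M := (Var -> Val).
Definition body := msem W cond asg P.
Definition F := Phi W cond b body.

Fixpoint iter (n : nat) : M -> T W M :=
  match n with 0 => fun _ => bot M | S n => F (iter n) end.

Lemma F_mono (g g' : M -> T W M) : kle W g g' -> kle W (F g) (F g').
Proof.
  intros H x. unfold F, Phi, kcomp. destruct (cond b x).
  - apply kcomp_mono_l. exact H.
  - apply le_refl.
Qed.

Lemma chain : forall n x, le (iter n x) (iter (S n) x).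
Proof.
  induction n; intro x.
  - apply bot_least.
  - apply F_mono. exact IHn.
Qed.

Definition fw (x : M) : T W M := sup (fun n => iter n x).

Lemma fw_fix : forall x, F fw x = fw x.
Proof.
  intros x. unfold F at 1, Phi, kcomp, fw.
  destruct (cond b x) eqn:E.
  - rewrite (kcomp_cont_l W _ iter body (fun n y => chain n y) x).
    apply le_antisym.
    + apply sup_least.
      * intros n. apply kcomp_mono_l. intro; apply chain.
      * intros n.
        assert (Hn := sup_ub W _ (fun n => iter n x) (fun n => chain n x) (S n)).
        simpl in Hn. unfold F, Phi, kcomp in Hn. rewrite E in Hn. exact Hn.
    + apply sup_least. { intros n; apply chain. }
      assert (Hc : forall n, le (ext (iter n) (body x)) (ext (iter (S n)) (body x))).
      { intros n. apply kcomp_mono_l. intro; apply chain. }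
      intros [|n].
      * eapply le_trans; [apply bot_least|].
        apply (sup_ub W _ _ Hc 0).
      * simpl. unfold F at 1, Phi, kcomp. rewrite E.
        apply (sup_ub W _ _ Hc n).
  - apply le_antisym.
    + assert (H1 := sup_ub W _ (fun n => iter n x) (fun n => chain n x) 1).
      simpl in H1. unfold F, Phi in H1. rewrite E in H1. exact H1.
    + apply sup_least. { intros n; apply chain. }
      intros [|n]; [apply bot_least|]. simpl. unfold F, Phi. rewrite E. apply le_refl.
Qed.

Lemma fw_least : forall g, (forall x, F g x = g x) -> kle W fw g.
Proof.
  intros g Hg x. apply sup_least. { intros n; apply chain. }
  intros n. revert x. induction n; intro x.
  - apply bot_least.
  - rewrite <- Hg. apply F_mono. exact IHn.
Qed.

Definition h := msem W cond asg (While b P).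

Lemma h_spec : is_klfp W F h.
Proof.
  unfold h. simpl. unfold klfp.
  apply (epsilon_spec (inhabits (fun _ : M => bot M)) (is_klfp W F)).
  exists fw. split; [apply fw_fix | apply fw_least].
Qed.

Lemma h_eq : forall x, h x = fw x.
Proof.
  intros x. destruct h_spec as [H1 H2]. apply le_antisym.
  - apply H2. exact fw_fix.
  - apply fw_least. exact H1.
Qed.

Lemma wp_F g (psi : M -> car L) rho :
  wp W L o (F g) psi rho =
  if cond b rho then wp W L o body (wp W L o g psi) rho else psi rho.
Proof.
  unfold F, Phi. unfold wp at 1. destruct (cond b rho).
  - apply (wp_kcomp Halg).
  - apply (wp_ret Halg).
Qed.

Lemma wp_h psi rho :
  wp W L o h psi rho =
  if cond b rho then wp W L o body (wp W L o h psi) rho else psi rho.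
Proof.
  rewrite <- wp_F. unfold wp. f_equal. f_equal. symmetry. apply (proj1 h_spec).
Qed.

Lemma grd_tt rho : cond b rho = true -> grd cond L b true rho = ltop L.
Proof. intros E. unfold grd. rewrite E. reflexivity. Qed.
Lemma grd_tf rho : cond b rho = false -> grd cond L b true rho = lbot L.
Proof. intros E. unfold grd. rewrite E. reflexivity. Qed.
Lemma grd_ft rho : cond b rho = true -> grd cond L b false rho = lbot L.
Proof. intros E. unfold grd. rewrite E. reflexivity. Qed.
Lemma grd_ff rho : cond b rho = false -> grd cond L b false rho = ltop L.
Proof. intros E. unfold grd. rewrite E. reflexivity. Qed.

Lemma meet_top (a : car L) : cle a (meet2 a (ltop L)).
Proof. apply m2_glb; [apply cle_refl | apply top_max]. Qed.

Theorem main :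
  is_lfp_jp (Psi W cond asg L o b P) (csem W cond asg L o (While b P)).
Proof.
  assert (Ah := sp_adj Hmeet h).
  assert (Ab := sp_adj Hmeet body).
  fold h. unfold csem. fold h.
  split; [|split].
  - exact (adj_jp Ah).
  -
    apply (adj_unique (h := wp W L o h)); [|exact Ah].
    intros phi psi. unfold Psi, csem. fold body. split.
    + intros H rho. rewrite wp_h. destruct (cond b rho) eqn:E.
      * assert (H1 : ple (sp W L o h (sp W L o body (pmeet phi (grd cond L b true)))) psi).
        { intro z. eapply cle_trans; [apply j2_l | apply H]. }
        apply Ah in H1. apply Ab in H1.
        eapply cle_trans; [| apply H1]. unfold pmeet. rewrite grd_tt by exact E.
        apply meet_top.
      * eapply cle_trans; [| apply H]. unfold pjoin. eapply cle_trans; [| apply j2_r].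
        unfold pmeet. rewrite grd_ff by exact E. apply meet_top.
    + intros H z. unfold pjoin. apply j2_lub.
      * revert z. apply Ah. apply Ab. intros rho. unfold pmeet.
        destruct (cond b rho) eqn:E.
        -- eapply cle_trans; [apply m2_l|]. eapply cle_trans; [apply H|].
           rewrite wp_h, E. apply cle_refl.
        -- eapply cle_trans; [apply m2_r|]. rewrite grd_tf by exact E. apply bot_min.
      * unfold pmeet. destruct (cond b z) eqn:E.
        -- eapply cle_trans; [apply m2_r|]. rewrite grd_ft by exact E. apply bot_min.
        -- eapply cle_trans; [apply m2_l|]. eapply cle_trans; [apply H|].
           rewrite wp_h, E. apply cle_refl.
  - intros g _ Hg phi y. revert y. apply Ah.
    assert (Claim : forall n phi, ple phi (wp W L o (iter n) (g phi))).
    { induction n; intros phi' rho.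
      - unfold wp. simpl. unfold Tmap. rewrite kcomp_bot, Hbot. apply top_max.
      - simpl iter. rewrite wp_F. destruct (cond b rho) eqn:E.
        + assert (H1 : ple (sp W L o body (pmeet phi' (grd cond L b true)))
                          (wp W L o (iter n) (g phi'))).
          { intro z. eapply cle_trans; [apply IHn|].
            apply (wp_mono Hmeet). intro w. rewrite <- (Hg phi' w). unfold Psi, pjoin, csem.
            apply j2_l. }
          apply Ab in H1. eapply cle_trans; [|apply H1].
          unfold pmeet. rewrite grd_tt by exact E. apply meet_top.
        + rewrite <- Hg. unfold Psi, pjoin. eapply cle_trans; [|apply j2_r].
          unfold pmeet. rewrite grd_ff by exact E. apply meet_top. }
    intros rho. unfold wp at 1. rewrite h_eq. unfold fw, Tmap.
    rewrite (kcomp_cont_r W _ (fun x => ret (g phi x)) iter (fun n y => chain n y)).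
    rewrite Hchain.
    + apply Meet_glb. intros w [n ->]. apply (Claim n phi rho).
    + intros n. apply kcomp_mono_r. intro; apply chain.
Qed.
End Main.

Theorem mainTheorem4
  (W : WhileMonad) (L : CLattice) (o : T W (car L) -> car L)
  (Var Val Expr Cond : Type)
  (Hfin : exists l : list Var, forall x : Var, List.In x l)
  (cond : Cond -> (Var -> Val) -> bool)
  (asg : Var -> Expr -> (Var -> Val) -> T W (Var -> Val))
  (Halg : EM_algebra W L o)
  (Hmeet : meet_preserving W L o)
  (Hchain : forall c : nat -> T W (car L),
      (forall n, le (c n) (c (S n))) ->
      o (sup c) = Meet (fun w => exists n, w = o (c n)))
  (Hbot : o (bot (car L)) = ltop L)
  (b : Cond) (P : prog Var Expr Cond) :
  is_lfp_jp (Psi W cond asg L o b P) (csem W cond asg L o (While b P)).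
Proof.
  eapply main; eauto.
Qed.
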